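(* For $M=2$ there exist unitary operators $S,T$ on $\mathcal{H}_2\otimes\mathcal{H}_2$ such that $S\bar{Q}_fT=U_f$ for both permutations $f$ of $\mathbb{Z}_2$. For every integer $M\ge3$ there do not exist unitary operators $S,T$ on $\mathcal{H}_M\otimes\mathcal{H}_M$ such that $S\bar{Q}_fT=U_f$ for every permutation $f$ of $\mathbb{Z}_M$.
   Context: $\mathcal{H}_M$ is an $M$-dimensional Hilbert space with orthonormal basis $\{|x\rangle\}_{x\in\mathbb{Z}_M}$. For a permutation $f$ of $\mathbb{Z}_M$: the standard oracle operator is $U_f$ on $\mathcal{H}_M\otimes\mathcal{H}_M$ with $U_f|x\rangle\otimes|y\rangle=|x\rangle\otimes|y\oplus f(x)\rangle$ ($\oplus$ addition mod $M$); the minimal oracle operator is $Q_f$ on $\mathcal{H}_M$ with $Q_f|x\rangle=|f(x)\rangle$; the entanglement-assisted minimal oracle operator is $\bar{Q}_f=Q_f\otimes\mathbb{1}_M$. *)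

(* Defs.v *)
(* Operators on H_M (x) H_M are (M*M)x(M*M) matrices over an
   arbitrary numClosedFieldType C (covers the complex numbers). The basis
   vector |x> (x) |y> is index mxtens_index (x, y); column b of a matrix is the
   image of basis vector b. *)
From HB Require Import structures.
From mathcomp Require Import all_boot all_order all_algebra all_fingroup.
From mathcomp Require Import spectral.
From mathcomp Require Import mxtens.
Set Implicit Arguments. Unset Strict Implicit. Unset Printing Implicit Defensive.
Import Order.TTheory GRing.Theory Num.Theory.
Local Open Scope ring_scope.

Section Oracles.
Variable C : numClosedFieldType.
Variable M : nat.

Definition addM_eq (z y w : 'I_M) : bool := val z == ((val y + val w) %% M)%N.

(* standard oracle: U_f |x>|y> = |x>|y (+) f x> *)
Definition Uop (f : {perm 'I_M}) : 'M[C]_(M * M) :=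
  \matrix_(i, j)
    (((mxtens_unindex i).1 == (mxtens_unindex j).1)
     && addM_eq (mxtens_unindex i).2 (mxtens_unindex j).2
                (f (mxtens_unindex j).1))%:R.

Definition Qop (f : {perm 'I_M}) : 'M[C]_M :=
  \matrix_(i, j) (i == f j)%:R.

Definition Qbar (f : {perm 'I_M}) : 'M[C]_(M * M) := Qop f *t (1%:M : 'M[C]_M).

End Oracles.

(* Main.v *)
Require Import Defs.
From HB Require Import structures.
From mathcomp Require Import all_boot all_order all_algebra all_fingroup.
From mathcomp Require Import spectral mxtens.
From mathcomp Require Import zify.
Import Order.TTheory GRing.Theory Num.Theory.
Local Open Scope ring_scope.
Local Open Scope sesquilinear_scope.

Section FM.
Variable C : numClosedFieldType.
Variable M : nat.
Notation P := ('I_M * 'I_M)%type.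

Definition fm (h : P -> P) : 'M[C]_(M * M) :=
  \matrix_(i, j) (mxtens_unindex i == h (mxtens_unindex j))%:R.

Lemma fm_mul h k : fm h *m fm k = fm (h \o k).
Proof.
apply/matrixP => i j; rewrite !mxE.
rewrite (bigD1 (mxtens_index (k (mxtens_unindex j)))) //= big1 => [|l ne].
  by rewrite !mxE mxtens_indexK eqxx mulr1 addr0.
rewrite !mxE; have -> : (mxtens_unindex l == k (mxtens_unindex j)) = false.
  apply/negbTE; apply: contra ne => /eqP <-; by rewrite mxtens_unindexK.
by rewrite mulr0.
Qed.

Lemma fm_ext h k : h =1 k -> fm h = fm k.
Proof. by move=> E; apply/matrixP => i j; rewrite !mxE E. Qed.

Lemma fm_id : fm id = 1%:M.
Proof.
apply/matrixP => i j; rewrite !mxE /=.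
by rewrite (inj_eq (can_inj (@mxtens_unindexK M M))).
Qed.

Lemma fm_inj h k : fm h = fm k -> h =1 k.
Proof.
move=> E p; have := congr1 (fun A : 'M[C]_(M * M) => A (mxtens_index (h p)) (mxtens_index p)) E.
rewrite !mxE !mxtens_indexK eqxx /=.
by case: eqP => // _ /eqP; rewrite oner_eq0.
Qed.

Lemma fm_adj h h' : cancel h h' -> cancel h' h -> (fm h)^t* = fm h'.
Proof.
move=> hK h'K; apply/matrixP => i j; rewrite !mxE conjC_nat.
congr ((nat_of_bool _)%:R); apply/idP/idP => /eqP E; apply/eqP; first by rewrite E hK.
by rewrite E h'K.
Qed.

Lemma fm_unitary h h' : cancel h h' -> cancel h' h -> fm h \is unitarymx.
Proof.
move=> hK h'K; apply/unitarymxP; rewrite (@fm_adj h h' hK h'K : _ = fm h') fm_mul.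
by rewrite -fm_id; apply: fm_ext => p /=; rewrite h'K.
Qed.

Lemma pos_of (y : 'I_M) : (0 < M)%N.
Proof. exact: leq_ltn_trans (leq0n _) (ltn_ord y). Qed.

Definition addo (y w : 'I_M) : 'I_M := Ordinal (ltn_pmod (y + w) (pos_of y)).
Definition subo (y w : 'I_M) : 'I_M := Ordinal (ltn_pmod (y + (M - w)) (pos_of y)).

Definition uf (f : {perm 'I_M}) (p : P) : P := (p.1, addo p.2 (f p.1)).
Definition qf (f : {perm 'I_M}) (p : P) : P := (f p.1, p.2).
Definition vv (p : P) : P := (p.1, subo p.2 p.1).

Lemma Uop_fm f : Uop C f = fm (uf f).
Proof.
apply/matrixP => i j; rewrite !mxE /uf /addM_eq.
case: (mxtens_unindex i) => a b; case: (mxtens_unindex j) => c d /=.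
by [].
Qed.

Lemma Qbar_fm f : Qbar C f = fm (qf f).
Proof.
apply/matrixP => i j; rewrite !mxE /qf.
case: (mxtens_unindex i) => a b; case: (mxtens_unindex j) => c d /=.
by rewrite xpair_eqE -natrM mulnb.
Qed.


Lemma vvK : forall p, uf 1 (vv p) = p.
Proof.
case=> x y; rewrite /uf /vv /=; congr pair; apply: val_inj => /=.
by rewrite perm1 modnDml -addnA subnK ?(ltnW (ltn_ord x)) // modnDr modn_small.
Qed.

Lemma vvK' : forall p, vv (uf 1 p) = p.
Proof.
case=> x y; rewrite /uf /vv /=; congr pair; apply: val_inj => /=.
by rewrite perm1 modnDml -addnA subnKC ?(ltnW (ltn_ord x)) // modnDr modn_small.
Qed.

Lemma QbarM (f g : {perm 'I_M}) : Qbar C f *m Qbar C g = Qbar C (g * f)%g.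
Proof. by rewrite !Qbar_fm fm_mul; apply: fm_ext => p; rewrite /qf /= permM. Qed.

Lemma no_ST : (2 < M)%N -> ~ exists S T : 'M[C]_(M * M),
          S \is unitarymx /\ T \is unitarymx /\
          forall f : {perm 'I_M}, S *m Qbar C f *m T = Uop C f.
Proof.
move=> M3 [S [T [uS [uT H]]]].
have K1 (f g : {perm 'I_M}) : Uop C f *m (T^t* *m S^t*) *m Uop C g = Uop C (g * f)%g.
  by rewrite -!H -QbarM !mulmxA mulmxtVK // mulmxKtV.
set W := T^t* *m S^t* in K1.
have VU : fm vv *m Uop C 1 = 1%:M by rewrite Uop_fm fm_mul -fm_id; apply: fm_ext => p; exact: vvK'.
have UV : Uop C 1 *m fm vv = 1%:M by rewrite Uop_fm fm_mul -fm_id; apply: fm_ext => p; exact: vvK.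
have WV : W = fm vv.
  have := K1 1%g 1%g; rewrite mulg1 => E.
  have : fm vv *m (Uop C 1 *m W *m Uop C 1) *m fm vv = fm vv *m Uop C 1 *m fm vv by rewrite E.
  by rewrite !mulmxA VU !mul1mx -!mulmxA UV mulmx1.
rewrite WV in K1.
have h1 : (1 < M)%N by apply: ltnW.
have h0 : (0 < M)%N by apply: ltnW.
pose o0 := Ordinal h0; pose o1 := Ordinal h1; pose o2 := Ordinal M3.
have n01 : o0 != o1 by []. have n02 : o2 != o0 by []. have n12 : o2 != o1 by [].
have := K1 (tperm o0 o1) (tperm o1 o2).
rewrite !Uop_fm !fm_mul => /fm_inj /(_ (o1, o0)) /(congr1 (fun p => val p.2)).
rewrite /= /uf /vv /= permM tpermL tpermR tpermD //= !add0n addn0 modn_mod.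
have -> : (2 %% M + (M - 1) = 1 + M)%N by rewrite modn_small //; lia.
by rewrite modnDr !modn_small.
Qed.
End FM.
Arguments addo {M}. Arguments fm {C M}. Arguments uf {M}. Arguments qf {M}.

Lemma perm2 (f : {perm 'I_2}) (a : 'I_2) : nat_of_ord (f a) = ((a + f ord0) %% 2)%N.
Proof.
case: a => [[|[|n]] Ha] //=.
  by rewrite add0n modn_small // (_ : Ordinal Ha = ord0) //; apply: val_inj.
have : f (Ordinal Ha) != f ord0 by rewrite (inj_eq perm_inj).
rewrite -(inj_eq val_inj) /= => /eqP.
have := ltn_ord (f ord0); have := ltn_ord (f (Ordinal Ha)); lia.
Qed.

Definition sw (p : 'I_2 * 'I_2) := (p.2, p.1).
Definition tau (p : 'I_2 * 'I_2) := (addo p.2 p.1, p.1).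
Definition taui (p : 'I_2 * 'I_2) := (p.2, addo p.1 p.2).

Lemma swK : cancel sw sw. Proof. by case. Qed.
Lemma tauK : cancel tau taui.
Proof.
case=> a b; rewrite /tau /taui /=; congr pair; apply: val_inj => /=.
have := ltn_ord a; have := ltn_ord b; lia.
Qed.
Lemma tauiK : cancel taui tau.
Proof.
case=> a b; rewrite /tau /taui /=; congr pair; apply: val_inj => /=.
have := ltn_ord a; have := ltn_ord b; lia.
Qed.

Theorem mainTheorem14 (C : numClosedFieldType) :
  (exists S T : 'M[C]_(2 * 2),
      S \is unitarymx /\ T \is unitarymx /\
      forall f : {perm 'I_2}, S *m Qbar C f *m T = Uop C f) /\
  (forall M : nat, (3 <= M)%N ->
      ~ exists S T : 'M[C]_(M * M),
          S \is unitarymx /\ T \is unitarymx /\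
          forall f : {perm 'I_M}, S *m Qbar C f *m T = Uop C f).
Proof.
split; last by move=> M; exact: (@no_ST C M).
exists (fm sw), (fm tau); split; first exact: (@fm_unitary C 2 _ _ swK swK).
split; first exact: (@fm_unitary C 2 _ _ tauK tauiK).
move=> f; rewrite Qbar_fm Uop_fm !fm_mul; apply: fm_ext => -[x y].
rewrite /sw /tau /qf /uf /=; congr pair; apply: val_inj.
rewrite /=; move: (perm2 f x) (perm2 f (addo y x)) (ltn_ord x) (ltn_ord y) (ltn_ord (f ord0)); rewrite /=; lia.
Qed.
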